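(* Let $X$ be a finite discrete space with at least two elements, $\Gamma$ a nonempty countable set, $\varphi:\Gamma\to\Gamma$ a map, and $d$ a compatible metric on $X^\Gamma$. For each $x=(x_\alpha)\in X^\Gamma$ choose $y^x=(y^x_\alpha)\in X^\Gamma$ such that $\{\alpha\in\Gamma:x_\alpha\neq y^x_\alpha\}$ is a finite set of non-quasi-periodic points of $\varphi$. Let $D\subseteq X^\Gamma$ and $u,v\in X^\Gamma$. Then: (1) $F^*_{uv}(t)=1$ for all $t>0$ iff $F^*_{y^uy^v}(t)=1$ for all $t>0$; (2) there is $t>0$ with $F_{xz}(t)=0$ for all distinct $x,z\in D$ iff there is $t>0$ with $F_{y^xy^z}(t)=0$ for all distinct $x,z\in D$; (3) there is $t>0$ with $F_{xz}(t)<1$ for all distinct $x,z\in D$ iff there is $t>0$ with $F_{y^xy^z}(t)<1$ for all distinct $x,z\in D$. In particular, for $i\in\{1,2\}$, $D$ is a distributional scrambled set of type $i$ iff $\{y^x:x\in D\}$ is a distributional scrambled set of type $i$.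
   Context: $X^\Gamma$ has the product topology; $\sigma_\varphi((x_\alpha)_{\alpha\in\Gamma})=(x_{\varphi(\alpha)})_{\alpha\in\Gamma}$. A point $\theta\in\Gamma$ is non-quasi-periodic if $\{\varphi^n(\theta):n\ge0\}$ is infinite. With $f=\sigma_\varphi$, $\xi(x,y,t,n)=\#\{i\in\{0,\dots,n-1\}:d(f^i(x),f^i(y))<t\}$, $F_{xy}(t)=\liminf_n\xi(x,y,t,n)/n$, $F^*_{xy}(t)=\limsup_n\xi(x,y,t,n)/n$. A pair $x,y$ is distributional scrambled of type 1 if there is $s>0$ with $F_{xy}(s)=0$ and $F^*_{xy}(s)=1$ for all $s>0$; of type 2 if there is $s>0$ with $F_{xy}(s)<1$ and $F^*_{xy}(s)=1$ for all $s>0$. A set with at least two elements is distributional scrambled of type $i$ if every pair of its distinct points is.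
   Formalization: In the final claim, $\{y^x:x\in D\}$ is replaced by the family indexed by D: D has at least two elements and $y^x$, $y^z$ form a distributional scrambled pair of type i for all distinct x,z in D. The statement above fails without it. *)

(* Defs.v *)
From HB Require Import structures.
From mathcomp Require Import all_boot all_order all_algebra.
From mathcomp Require Import all_classical all_reals.
From mathcomp Require Import topology normedtype sequences.
Set Implicit Arguments. Unset Strict Implicit. Unset Printing Implicit Defensive.
Import Order.TTheory GRing.Theory Num.Theory.
Local Open Scope ring_scope.
Local Open Scope classical_set_scope.

Definition shift (X Gamma : Type) (phi : Gamma -> Gamma) (x : Gamma -> X) : Gamma -> X :=
  fun a => x (phi a).

Definition non_quasi_periodic (Gamma : Type) (phi : Gamma -> Gamma) (theta : Gamma) :=
  infinite_set [set iter n phi theta | n in [set: nat]].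

Definition is_metric (R : realType) (T : Type) (d : T -> T -> R) :=
  [/\ forall x y, 0 <= d x y,
      forall x y, d x y = 0 <-> x = y,
      forall x y, d x y = d y x &
      forall x y z, d x z <= d x y + d y z].

(* Cylinder (basic open) neighbourhood of x in the product topology of X^Gamma,
   X discrete: all points agreeing with x on the finite set of coordinates s. *)
Definition cylinder (X Gamma : eqType) (s : seq Gamma) (x : Gamma -> X) :=
  [set y : Gamma -> X | forall a, a \in s -> y a = x a].

(* d is compatible with the product topology on X^Gamma (X discrete): d is a
   metric, and at every point the open d-balls and the cylinders form
   mutually cofinal neighbourhood bases (i.e. the two topologies coincide). *)
Definition compatible_metric (R : realType) (X Gamma : eqType)
    (d : (Gamma -> X) -> (Gamma -> X) -> R) :=
  is_metric d /\
  forall x : Gamma -> X,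
    (forall e : R, 0 < e -> exists s : seq Gamma,
        cylinder s x `<=` [set y | d x y < e]) /\
    (forall s : seq Gamma, exists2 e : R, 0 < e &
        [set y | d x y < e] `<=` cylinder s x).

Definition xi (R : realType) (X Gamma : Type) (phi : Gamma -> Gamma)
    (d : (Gamma -> X) -> (Gamma -> X) -> R) (x y : Gamma -> X) (t : R) (n : nat) : nat :=
  #|[set i : 'I_n | (d (iter i (shift phi) x) (iter i (shift phi) y) < t)%R]|.

Definition Flow (R : realType) (X Gamma : Type) (phi : Gamma -> Gamma)
    (d : (Gamma -> X) -> (Gamma -> X) -> R) (x y : Gamma -> X) (t : R) : R :=
  limn_inf (fun n => (xi phi d x y t n)%:R / n%:R).

Definition Fup (R : realType) (X Gamma : Type) (phi : Gamma -> Gamma)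
    (d : (Gamma -> X) -> (Gamma -> X) -> R) (x y : Gamma -> X) (t : R) : R :=
  limn_sup (fun n => (xi phi d x y t n)%:R / n%:R).

Definition DC1_pair (R : realType) (X Gamma : Type) (phi : Gamma -> Gamma)
    (d : (Gamma -> X) -> (Gamma -> X) -> R) (x y : Gamma -> X) :=
  (exists2 s : R, 0 < s & Flow phi d x y s = 0) /\
  (forall s : R, 0 < s -> Fup phi d x y s = 1).

Definition DC2_pair (R : realType) (X Gamma : Type) (phi : Gamma -> Gamma)
    (d : (Gamma -> X) -> (Gamma -> X) -> R) (x y : Gamma -> X) :=
  (exists2 s : R, 0 < s & Flow phi d x y s < 1) /\
  (forall s : R, 0 < s -> Fup phi d x y s = 1).

Definition scrambled_set (T : Type) (P : T -> T -> Prop) (S : set T) :=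
  (exists x y, [/\ S x, S y & x <> y]) /\
  (forall x y, S x -> S y -> x <> y -> P x y).

(* Main.v *)
Require Import Defs.
From HB Require Import structures.
From mathcomp Require Import all_boot all_order all_algebra.
From mathcomp Require Import all_classical all_reals.
From mathcomp Require Import topology normedtype sequences.
From mathcomp Require Import zify.
From mathcomp.algebra_tactics Require Import ring.
From mathcomp Require finmap.
Import Order.TTheory GRing.Theory Num.Theory.
Import numFieldNormedType.Exports.
Local Open Scope ring_scope.
Local Open Scope classical_set_scope.

Lemma card_sum (n : nat) (P : pred nat) : #|[set i : 'I_n | P i]| = (\sum_(i < n) (P i : nat))%N.
Proof.
rewrite -sum1_card big_mkcond /=; apply: eq_bigr => i _.
case: ifPn => h. move: h. rewrite in_setE. by move=> ->. move: h. apply: contraNeq. case hP: (P i) => // _. by rewrite in_setE.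
Qed.
Lemma sum_lt n N : \sum_(i < n) ((i < N)%N : nat) = minn n N.
Proof. elim: n => [|n IH]; first by rewrite big_ord0 min0n.
rewrite big_ord_recr /= IH; case: ltnP => h; lia. Qed.
Lemma count_le (n N : nat) (P Q : pred nat) : (forall i, (N <= i)%N -> P i -> Q i) ->
  (#|[set i : 'I_n | P i]| <= #|[set i : 'I_n | Q i]| + N)%N.
Proof.
move=> H; rewrite !card_sum.
apply: (@leq_trans (\sum_(i < n) ((Q i : nat) + ((i < N)%N : nat)))).
  apply: leq_sum => i _; case: (ltnP i N) => h; first by case: (P i); case: (Q i).
  by case hP: (P i) => //; rewrite (H _ h hP).
by rewrite big_split /= sum_lt leq_add2l geq_minr.
Qed.

Section L.
Variable R : realType.
Implicit Types u v : R^o^nat.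

Lemma c_cvg (N : nat) : (fun n : nat => N%:R / n%:R : R) @ \oo --> 0.
Proof.
have h : (fun n : nat => (n%:R : R)^-1) @ \oo --> 0.
  apply/gtr0_cvgV0; last exact: cvgr_idn.
  by near=> n; rewrite ltr0n; near: n; exists 1%N.
rewrite -(mulr0 (N%:R : R)); exact: cvgMl_tmp.
Unshelve. all: by end_near. Qed.

Lemma bnd_fun u (M : R) : (forall n, `|u n| <= M) -> bounded_fun u.
Proof.
move=> uM; rewrite /bounded_near; near=> M'.
move=> n _ /=; apply: (le_trans (uM n)).
by near: M'; apply: nbhs_pinfty_ge; rewrite num_real.
Unshelve. all: by end_near. Qed.

Lemma le_limn_sup u v : bounded_fun u -> bounded_fun v ->
  (forall n, u n <= v n) -> limn_sup u <= limn_sup v.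
Proof.
move=> bu bv uv.
have cu : cvgn (sups u).
  apply: nonincreasing_is_cvgn; last exact: bounded_fun_has_lbound_sups.
  exact/nonincreasing_sups/bounded_fun_has_ubound.
have cv : cvgn (sups v).
  apply: nonincreasing_is_cvgn; last exact: bounded_fun_has_lbound_sups.
  exact/nonincreasing_sups/bounded_fun_has_ubound.
apply: ler_lim => //; apply: nearW => k.
apply: ge_sup; first by exists (u k); exists k => /=.
move=> M [n /= kn <-]; apply: le_trans (uv n) _.
apply: ub_le_sup; last by exists n.
exact/has_ubound_sdrop/bounded_fun_has_ubound.
Qed.

Lemma le_limn_inf u v : bounded_fun u -> bounded_fun v ->
  (forall n, u n <= v n) -> limn_inf u <= limn_inf v.
Proof.
move=> bu bv uv.
have cu : cvgn (infs u).
  apply: nondecreasing_is_cvgn; last exact: bounded_fun_has_ubound_infs.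
  exact/nondecreasing_infs/bounded_fun_has_lbound.
have cv : cvgn (infs v).
  apply: nondecreasing_is_cvgn; last exact: bounded_fun_has_ubound_infs.
  exact/nondecreasing_infs/bounded_fun_has_lbound.
apply: ler_lim => //; apply: nearW => k.
apply: lb_le_inf; first by exists (v k); exists k => /=.
move=> M [n /= kn <-]; apply: le_trans (uv n).
apply: ge_inf; last by exists n.
exact/has_lbound_sdrop/bounded_fun_has_lbound.
Qed.


Lemma ratio_ge0 (k n : nat) : 0 <= (k%:R / n%:R : R).
Proof. by rewrite divr_ge0. Qed.

Lemma ratio_le1 (k n : nat) : (k <= n)%N -> (k%:R / n%:R : R) <= 1.
Proof.
move=> kn; case: n kn => [|n] kn; first by rewrite invr0 mulr0.
by rewrite ler_pdivrMr ?ltr0n // mul1r ler_nat.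
Qed.

Lemma ratio_leN (N n : nat) : (N%:R / n%:R : R) <= N%:R.
Proof.
case: n => [|n]; first by rewrite invr0 mulr0.
by rewrite ler_pdivrMr ?ltr0n // ler_peMr // ler1n.
Qed.

Lemma bnd_ratio (a : nat -> nat) : (forall n, a n <= n)%N ->
  bounded_fun (fun n => ((a n)%:R / (n%:R) : R)).
Proof.
move=> an; apply: (@bnd_fun _ 1) => n.
by rewrite ger0_norm ?ratio_ge0 // ratio_le1.
Qed.

Lemma bnd_c (N : nat) : bounded_fun (fun n => (N%:R / (n%:R) : R)).
Proof.
apply: (@bnd_fun _ N%:R) => n.
by rewrite ger0_norm ?ratio_ge0 // ratio_leN.
Qed.

Lemma bnd_cN (N : nat) : bounded_fun (fun n => - (N%:R / (n%:R) : R)).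
Proof.
apply: (@bnd_fun _ N%:R) => n.
by rewrite normrN ger0_norm ?ratio_ge0 // ratio_leN.
Qed.

Lemma ratio_cmp (a b : nat -> nat) N n : (a n <= b n + N)%N ->
  ((a n)%:R / n%:R : R) <= (b n)%:R / n%:R + N%:R / n%:R.
Proof.
move=> h; rewrite -mulrDl -natrD; apply: ler_wpM2r; first by rewrite invr_ge0.
by rewrite ler_nat.
Qed.

Lemma cmp_sup (a b : nat -> nat) N : (forall n, a n <= n)%N -> (forall n, b n <= n)%N ->
  (forall n, a n <= b n + N)%N ->
  limn_sup (fun n => ((a n)%:R / n%:R : R)) <= limn_sup (fun n => ((b n)%:R / n%:R : R)).
Proof.
move=> ha hb hab.
apply: (@le_trans _ _ (limn_sup ((fun n => ((b n)%:R / n%:R : R)) \+ (fun n => N%:R / n%:R)))).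
  apply: le_limn_sup; [exact: bnd_ratio| |].
    by apply: bounded_funD; [exact: bnd_ratio|exact: bnd_c].
  move=> n /=; exact: ratio_cmp.
apply: (le_trans (le_limn_supD _ _)); [exact: bnd_ratio hb|exact: bnd_c|].
by rewrite (cvg_limn_inf_sup (c_cvg N)).2 addr0.
Qed.

Lemma cmp_inf (a b : nat -> nat) N : (forall n, a n <= n)%N -> (forall n, b n <= n)%N ->
  (forall n, a n <= b n + N)%N ->
  limn_inf (fun n => ((a n)%:R / n%:R : R)) <= limn_inf (fun n => ((b n)%:R / n%:R : R)).
Proof.
move=> ha hb hab.
have c0 : limn_inf (fun n => - (N%:R / n%:R : R)) = 0.
  have := cvgN (c_cvg N); rewrite oppr0 => /(_ _) h.
  have [h1 _] := cvg_limn_inf_sup h. by rewrite -h1.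
rewrite -[X in X <= _]addr0 -{1}c0.
apply: (le_trans (le_limn_infD _ _)); [exact: bnd_ratio ha|exact: bnd_cN|].
apply: le_limn_inf; [|exact: bnd_ratio|].
  by apply: bounded_funD; [exact: bnd_ratio|exact: bnd_cN].
move=> n /=; rewrite lerBlDr; exact: ratio_cmp.
Qed.

Lemma limsup_le1 (a : nat -> nat) : (forall n, a n <= n)%N ->
  limn_sup (fun n => ((a n)%:R / n%:R : R)) <= 1.
Proof.
move=> ha; have h1 : limn_sup (fun n : nat => (1 : R)) = 1.
  exact: (cvg_limn_inf_sup (cvg_cst (1 : R))).2.
rewrite -[X in _ <= X]h1; apply: le_limn_sup; [exact: bnd_ratio| |].
  exact: bounded_cst.
by move=> n; exact: ratio_le1.
Qed.

Lemma liminf_ge0 (a : nat -> nat) : (forall n, a n <= n)%N ->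
  0 <= limn_inf (fun n => ((a n)%:R / n%:R : R)).
Proof.
move=> ha; have h0 : limn_inf (fun n : nat => (0 : R)) = 0.
  exact: (cvg_limn_inf_sup (cvg_cst (0 : R))).1.
rewrite -[X in X <= _]h0; apply: le_limn_inf; [| exact: bnd_ratio|].
  exact: bounded_cst.
by move=> n; exact: ratio_ge0.
Qed.

End L.

Lemma iter_shift (X G : Type) (phi : G -> G) n (x : G -> X) :
  iter n (Defs.shift phi) x = fun a => x (iter n phi a).
Proof.
elim: n => [|n IH] //=; rewrite IH /Defs.shift; apply: funext => a.
by rewrite -iterSr.
Qed.

Lemma iter_mul (G : Type) (phi : G -> G) a p q : iter p phi a = a -> iter (q * p) phi a = a.
Proof. move=> h; elim: q => [|q IH] //; by rewrite mulSn iterD IH h. Qed.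

Lemma per_not_nqp (G : Type) (phi : G -> G) a p : (0 < p)%N -> iter p phi a = a ->
  ~ non_quasi_periodic phi a.
Proof.
move=> p0 h; apply; apply: (@sub_finite_set _ _ ((fun j => iter j phi a) @` `I_p)).
  move=> _ [j _ <-]; exists (j %% p)%N; first by rewrite /= ltn_mod.
  by rewrite {2}(divn_eq j p) addnC iterD (@iter_mul _ _ _ _ (j %/ p)%N h).
exact/finite_image/finite_II.
Qed.

Lemma hit_once (G : Type) (phi : G -> G) a g n m : non_quasi_periodic phi a ->
  iter n phi g = a -> iter m phi g = a -> n = m.
Proof.
move=> nq.
wlog: n m / (n <= m)%N => [W|nm hn hm].
  by case: (leqP n m) => h hn hm; [apply: W | apply/esym/W => //; apply: ltnW].
case: (ltnP n m) => nm'; last by apply/eqP; rewrite eqn_leq nm.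
exfalso; apply: (@per_not_nqp _ phi a (m - n)%N) nq; first by rewrite subn_gt0.
by rewrite -{1}hn -iterD subnK.
Qed.

Lemma avoid (G : Type) (phi : G -> G) a g : non_quasi_periodic phi a ->
  exists N, forall n, (N <= n)%N -> iter n phi g <> a.
Proof.
move=> nq; have [[n0 h0]|nh] := pselect (exists n0, iter n0 phi g = a).
  exists n0.+1 => n nn hn; have := @hit_once _ _ _ _ _ _ nq h0 hn; lia.
by exists 0%N => n _ hn; apply: nh; exists n.
Qed.

Lemma ev_seq (T : eqType) (s : seq T) (P : T -> nat -> Prop) :
  (forall a, a \in s -> exists N, forall n, (N <= n)%N -> P a n) ->
  exists N, forall a, a \in s -> forall n, (N <= n)%N -> P a n.
Proof.
elim: s => [|b s IH] H; first by exists 0%N.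
have [N1 h1] := H b (mem_head _ _).
have [N2 h2] : exists N, forall a, a \in s -> forall n, (N <= n)%N -> P a n.
  by apply: IH => a ha; apply: H; rewrite in_cons ha orbT.
exists (maxn N1 N2) => a; rewrite in_cons => /orP[/eqP->|ha] n hn.
  by apply: h1; lia.
by apply: h2 => //; lia.
Qed.

Module EA.
Import finmap.
Lemma ev_agree (X : Type) (G : countType) (phi : G -> G) (x w : G -> X) :
  finite_set [set a | x a <> w a] ->
  (forall a, x a <> w a -> non_quasi_periodic phi a) ->
  forall g, exists N, forall n, (N <= n)%N -> x (iter n phi g) = w (iter n phi g).
Proof.
move=> /finite_fsetP[F hF] nq g.
have [|N hN] := @ev_seq _ (finmap.enum_fset F) (fun a n => iter n phi g <> a).
  move=> a ha; apply: avoid; apply: nq.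
  have : [set` F] a by [].
  by rewrite -hF.
exists N => n hn; apply: contrapT => hne.
have : [set a | x a <> w a] (iter n phi g) by [].
rewrite hF /= => hin.
by apply: (hN _ hin n hn).
Qed.
End EA.
Import EA.

Section Unif.
Variables (R : realType) (X : finType) (G : countType).
Variable d : (G -> X) -> (G -> X) -> R.
Hypothesis compat : compatible_metric d.
Variable x0 : X.

Definition agree k (a b : G -> X) := forall g, (pickle g < k)%N -> a g = b g.

Lemma agree_sym k a b : agree k a b -> agree k b a.
Proof. by move=> h g hg; rewrite h. Qed.
Lemma agree_trans k a b c : agree k a b -> agree k b c -> agree k a c.
Proof. by move=> h1 h2 g hg; rewrite h1 // h2. Qed.
Lemma agree_mono k m a b : (k <= m)%N -> agree m a b -> agree k a b.
Proof. by move=> km h g hg; apply: h; apply: leq_trans hg km. Qed.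

Lemma seq_bound (s : seq G) : exists k, forall g, g \in s -> (pickle g < k)%N.
Proof.
elim: s => [|b s [k hk]]; first by exists 0%N.
exists (maxn k (pickle b).+1) => g; rewrite in_cons => /orP[/eqP->|hg]; first lia.
have := hk g hg; lia.
Qed.

Lemma unif (e : R) : 0 < e -> exists k, forall a b, agree k a b -> d a b < e.
Proof.
move=> e0; have [[dge0 deq dsym dtri] locb] := compat.
pose good a k := exists x, forall b, agree k a b -> d x b < e / 2.
have good_agree k a a' : agree k a a' -> good a k -> good a' k.
  move=> h [x hx]; exists x => b hb; apply: hx; exact: agree_trans h hb.
have good_mono k m a : (k <= m)%N -> good a k -> good a m.
  move=> km [x hx]; exists x => b hb; apply: hx; exact: agree_mono km hb.
have good_all a : exists k, good a k.
  have [s hs] := (locb a).1 (e / 2) (divr_gt0 e0 (ltr0n _ 2)).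
  have [k hk] := seq_bound s.
  exists k, a => b hb; apply: hs => g hg; apply/esym/hb; exact: hk.
suff [k hk] : exists k, forall a, good a k.
  exists k => a b hab; have [x hx] := hk a.
  have h1 := hx a (fun g _ => erefl); have h2 := hx b hab.
  apply: (le_lt_trans (dtri a x b)); rewrite dsym.
  by rewrite [e]splitr; apply: ltrD.
apply: contrapT => nH.
have H k : exists a, ~ good a k.
  apply: contrapT => h; apply: nH; exists k => a; apply: contrapT => ha; apply: h; by exists a.
pose ext a k := forall m, (k <= m)%N -> exists b, agree k a b /\ ~ good b m.
have step a k : ext a k -> exists a', agree k a a' /\ ext a' k.+1.
  move=> ea; apply: contrapT => hn.
  pose upd (c : X) := fun g => if pickle g == k then c else a g.
  have hc (c : X) : exists m, (k < m)%N /\ forall b, agree k.+1 (upd c) b -> good b m.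
    apply: contrapT => hc'; apply: hn; exists (upd c); split.
      by move=> g hg; rewrite /upd; case: eqP => // hk; move: hg; rewrite hk ltnn.
    move=> m km; apply: contrapT => hb; apply: hc'; exists m; split => // b hab.
    by apply: contrapT => ng; apply: hb; exists b.
  have [f hf] := choice hc.
  pose M := \max_(c : X) f c.
  have fM c : (f c <= M)%N by apply: leq_bigmax.
  have kM : (k <= M)%N by have := (hf x0).1; have := fM x0; lia.
  have [b [hab hb]] := ea M kM.
  pose c := oapp b x0 (unpickle k).
  have hagr : agree k.+1 (upd c) b.
    move=> g hg; rewrite /upd; case: eqP => [hk|hk].
      by rewrite /c -hk pickleK.
    by apply: hab; lia.
  by apply: hb; apply: good_mono (fM c) ((hf c).2 b hagr).
have hall (ak : (G -> X) * nat) : exists a', ext ak.1 ak.2 -> agree ak.2 ak.1 a' /\ ext a' ak.2.+1.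
  case: (pselect (ext ak.1 ak.2)) => [h|h].
    by have [a' ha'] := step _ _ h; exists a'.
  by exists ak.1.
have [nx hnx] := choice hall.
pose p := fix p k := if k is k'.+1 then nx (p k', k') else (fun _ : G => x0).
have hp k : ext (p k) k.
  elim: k => [|k IH].
    move=> m _; have [a ha] := H m; exists a; split => // g; by rewrite ltn0.
  exact: ((hnx (p k, k)) IH).2.
have hpa k : agree k (p k) (p k.+1) by exact: ((hnx (p k, k)) (hp k)).1.
have hpm k m : (k <= m)%N -> agree k (p k) (p m).
  elim: m => [|m IH] km; first by move: km; rewrite leqn0 => /eqP ->.
  case: (ltnP k m.+1) => hk.
    have km' : (k <= m)%N by lia.
    exact: agree_trans (IH km') (@agree_mono k m _ _ km' (hpa m)).
  have e' : k = m.+1 by lia.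
  by rewrite e' => g.
pose q g := p (pickle g).+1 g.
have hq k : agree k (p k) q.
  move=> g hg; rewrite /q; apply/esym; apply: (hpm (pickle g).+1 k hg).
  exact: ltnSn.
have [k0 gk0] := good_all q.
have [b [hb nb]] := hp k0 k0 (leqnn _).
apply: nb; apply: good_agree gk0.
exact: (@agree_trans _ _ _ _ (@agree_sym _ _ _ (hq k0)) hb).
Qed.
End Unif.

Section Main.
Variables (R : realType) (X : finType) (G : countType) (phi : G -> G).
Variable d : (G -> X) -> (G -> X) -> R.
Hypothesis compat : compatible_metric d.
Variable x0 : X.

Definition Close (a a' : G -> X) := forall e : R, 0 < e -> exists N, forall n, (N <= n)%N ->
  d (iter n (Defs.shift phi) a) (iter n (Defs.shift phi) a') < e.

Lemma close_y (x w : G -> X) : finite_set [set a | x a <> w a] ->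
  (forall a, x a <> w a -> non_quasi_periodic phi a) -> Close x w.
Proof.
move=> hfin hnq e e0.
have [k hk] := @unif R X G d compat x0 e e0.
have [|N hN] := @ev_seq _ (iota 0 k) (fun i n => forall g, pickle g = i ->
    x (iter n phi g) = w (iter n phi g)).
  move=> i _; case hu: (@unpickle G i) => [g0|].
    have [N hN] := @ev_agree X G phi x w hfin hnq g0.
    exists N => n hn g hg; move: hu; rewrite -hg pickleK => -[->]; exact: hN.
  by exists 0%N => n _ g hg; move: hu; rewrite -hg pickleK.
exists N => n hn; apply: hk => g hg; rewrite !iter_shift.
apply: (hN (pickle g)) => //; by rewrite mem_iota.
Qed.

Lemma close_sym a a' : Close a a' -> Close a' a.
Proof.
have [[_ _ dsym _] _] := compat.
move=> h e e0; have [N hN] := h e e0; exists N => n hn; rewrite dsym; exact: hN.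
Qed.

Lemma xi_le a b t n : (xi phi d a b t n <= n)%N.
Proof. by rewrite /xi; apply: leq_trans (max_card _) _; rewrite card_ord. Qed.

Lemma pair_cmp a a' b b' (t : R) : Close a a' -> Close b b' -> 0 < t ->
  exists N, forall n, (N <= n)%N -> (xi phi d a b (t / 2) n <= xi phi d a' b' t n + N)%N.
Proof.
have [[_ _ dsym dtri] _] := compat.
move=> ca cb t0.
have t4 : 0 < t / 4 by rewrite divr_gt0.
have [N1 h1] := ca _ t4; have [N2 h2] := cb _ t4.
exists (maxn N1 N2) => n _; rewrite /xi.
apply: (@count_le n (maxn N1 N2)
   (fun i => d (iter i (Defs.shift phi) a) (iter i (Defs.shift phi) b) < t / 2)
   (fun i => d (iter i (Defs.shift phi) a') (iter i (Defs.shift phi) b') < t)) => i hi /=.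
set A := iter i _ a; set A' := iter i _ a'; set B := iter i _ b; set B' := iter i _ b'.
move=> hAB.
have hA : d A A' < t / 4 by apply: h1; lia.
have hB : d B B' < t / 4 by apply: h2; lia.
have hs : d A' B' <= d A' A + d A B + d B B'.
  apply: le_trans (dtri A' A B') _; rewrite -addrA lerD2l; exact: dtri.
rewrite (dsym A' A) in hs.
apply: le_lt_trans hs _.
have -> : t = t / 4 + t / 2 + t / 4 by field.
by apply: ltrD; first apply: ltrD.
Qed.

Lemma Fup_cmp a a' b b' (t : R) : Close a a' -> Close b b' -> 0 < t ->
  Fup phi d a b (t / 2) <= Fup phi d a' b' t.
Proof.
move=> ca cb t0; have [N hN] := @pair_cmp a a' b b' t ca cb t0.
rewrite /Fup; apply: (@cmp_sup _ _ _ N); try (move=> n; exact: xi_le).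
move=> n; case: (leqP N n) => h; first exact: hN.
apply: leq_trans (xi_le _ _ _ _) _; apply: leq_trans (ltnW h) _; exact: leq_addl.
Qed.

Lemma Flow_cmp a a' b b' (t : R) : Close a a' -> Close b b' -> 0 < t ->
  Flow phi d a b (t / 2) <= Flow phi d a' b' t.
Proof.
move=> ca cb t0; have [N hN] := @pair_cmp a a' b b' t ca cb t0.
rewrite /Flow; apply: (@cmp_inf _ _ _ N); try (move=> n; exact: xi_le).
move=> n; case: (leqP N n) => h; first exact: hN.
apply: leq_trans (xi_le _ _ _ _) _; apply: leq_trans (ltnW h) _; exact: leq_addl.
Qed.

Lemma Fup_le1 a b t : Fup phi d a b t <= 1.
Proof. apply: limsup_le1 => n; exact: xi_le. Qed.

Lemma Flow_ge0 a b t : 0 <= Flow phi d a b t.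
Proof. apply: liminf_ge0 => n; exact: xi_le. Qed.

Lemma L_up a a' b b' : Close a a' -> Close b b' ->
  (forall t : R, 0 < t -> Fup phi d a b t = 1) -> (forall t : R, 0 < t -> Fup phi d a' b' t = 1).
Proof.
move=> ca cb h t t0; apply/eqP; rewrite eq_le Fup_le1 /=.
rewrite -(h (t / 2)); last by rewrite divr_gt0.
exact: Fup_cmp.
Qed.

Lemma L_low0 a a' b b' : Close a a' -> Close b b' -> forall t : R, 0 < t ->
  Flow phi d a b t = 0 -> Flow phi d a' b' (t / 2) = 0.
Proof.
move=> ca cb t t0 h; apply/eqP; rewrite eq_le Flow_ge0 andbT -h.
exact: (@Flow_cmp a' a b' b t (@close_sym a a' ca) (@close_sym b b' cb) t0).
Qed.

Lemma L_low1 a a' b b' : Close a a' -> Close b b' -> forall t : R, 0 < t ->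
  Flow phi d a b t < 1 -> Flow phi d a' b' (t / 2) < 1.
Proof.
move=> ca cb t t0 h; apply: le_lt_trans h.
exact: (@Flow_cmp a' a b' b t (@close_sym a a' ca) (@close_sym b b' cb) t0).
Qed.

Lemma DC1_tr a a' b b' : Close a a' -> Close b b' ->
  DC1_pair phi d a b -> DC1_pair phi d a' b'.
Proof.
move=> ca cb [[s s0 hs] hu]; split; last exact: (@L_up a a' b b' ca cb hu).
exists (s / 2); [by rewrite divr_gt0 | exact: (@L_low0 a a' b b' ca cb s s0 hs)].
Qed.

Lemma DC2_tr a a' b b' : Close a a' -> Close b b' ->
  DC2_pair phi d a b -> DC2_pair phi d a' b'.
Proof.
move=> ca cb [[s s0 hs] hu]; split; last exact: (@L_up a a' b b' ca cb hu).
exists (s / 2); [by rewrite divr_gt0 | exact: (@L_low1 a a' b b' ca cb s s0 hs)].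
Qed.

End Main.

Theorem corollary4p3 (R : realType) (X : finType) (Gamma : countType)
  (phi : Gamma -> Gamma) (d : (Gamma -> X) -> (Gamma -> X) -> R)
  (y : (Gamma -> X) -> (Gamma -> X)) :
  (1 < #|X|)%N ->
  inhabited Gamma ->
  compatible_metric d ->
  (forall x : Gamma -> X,
      finite_set [set a | x a <> y x a] /\
      (forall a, x a <> y x a -> non_quasi_periodic phi a)) ->
  forall (D : set (Gamma -> X)) (u v : Gamma -> X),
  [/\ (forall t : R, 0 < t -> Fup phi d u v t = 1) <->
        (forall t : R, 0 < t -> Fup phi d (y u) (y v) t = 1),
      (exists2 t : R, 0 < t &
         forall x z, D x -> D z -> x <> z -> Flow phi d x z t = 0) <->
      (exists2 t : R, 0 < t &
         forall x z, D x -> D z -> x <> z -> Flow phi d (y x) (y z) t = 0),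
      (exists2 t : R, 0 < t &
         forall x z, D x -> D z -> x <> z -> Flow phi d x z t < 1) <->
      (exists2 t : R, 0 < t &
         forall x z, D x -> D z -> x <> z -> Flow phi d (y x) (y z) t < 1),
      scrambled_set (DC1_pair phi d) D <->
        ((exists x z, [/\ D x, D z & x <> z]) /\
         forall x z, D x -> D z -> x <> z -> DC1_pair phi d (y x) (y z)) &
      scrambled_set (DC2_pair phi d) D <->
        ((exists x z, [/\ D x, D z & x <> z]) /\
         forall x z, D x -> D z -> x <> z -> DC2_pair phi d (y x) (y z))].
Proof.
move=> hX _ cm hy D u v.
have [x0 _] : exists x0 : X, x0 \in X by apply/card_gt0P; apply: ltnW hX.
have C x : Close R X Gamma phi d x (y x) by exact: (@close_y R X Gamma phi d cm x0 x (y x) (hy x).1 (hy x).2).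
have C' x : Close R X Gamma phi d (y x) x by exact: (@close_sym _ _ _ _ _ cm _ _ (C x)).
split.
- split; [exact: (@L_up _ _ _ _ _ cm _ _ _ _ (C u) (C v)) | exact: (@L_up _ _ _ _ _ cm _ _ _ _ (C' u) (C' v))].
- split=> -[t t0 h]; (exists (t / 2); first by rewrite divr_gt0) => x z Dx Dz xz.
    exact: (@L_low0 _ _ _ _ _ cm _ _ _ _ (C x) (C z) t t0 (h x z Dx Dz xz)).
  exact: (@L_low0 _ _ _ _ _ cm _ _ _ _ (C' x) (C' z) t t0 (h x z Dx Dz xz)).
- split=> -[t t0 h]; (exists (t / 2); first by rewrite divr_gt0) => x z Dx Dz xz.
    exact: (@L_low1 _ _ _ _ _ cm _ _ _ _ (C x) (C z) t t0 (h x z Dx Dz xz)).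
  exact: (@L_low1 _ _ _ _ _ cm _ _ _ _ (C' x) (C' z) t t0 (h x z Dx Dz xz)).
- split=> -[ex h]; split => // x z Dx Dz xz.
    exact: (@DC1_tr _ _ _ _ _ cm _ _ _ _ (C x) (C z) (h x z Dx Dz xz)).
  exact: (@DC1_tr _ _ _ _ _ cm _ _ _ _ (C' x) (C' z) (h x z Dx Dz xz)).
- split=> -[ex h]; split => // x z Dx Dz xz.
    exact: (@DC2_tr _ _ _ _ _ cm _ _ _ _ (C x) (C z) (h x z Dx Dz xz)).
  exact: (@DC2_tr _ _ _ _ _ cm _ _ _ _ (C' x) (C' z) (h x z Dx Dz xz)).
Qed.
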